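(* Let $u_1,\dots,u_n\in\mathbb{R}^d$, $c_1,\dots,c_m\in\mathbb{R}^n_{\ge0}$, budgets $b_1,\dots,b_m$, and $\varepsilon>0$ with $b_j\ge\frac{d\|c_j\|_\infty}{\varepsilon}$ for all $1\le j\le m$. Let $x\in[0,1]^n$ be an optimal solution of the convex program: maximize $\log\det(\sum_{i=1}^n x(i)u_iu_i^\top)$ subject to $\langle c_j,x\rangle\le b_j$ ($1\le j\le m$), $0\le x(i)\le1$ ($1\le i\le n$). Let $X=\sum_i x(i)u_iu_i^\top$ (nonsingular) and $v_i=X^{-1/2}u_i$. Then $\|v_i\|_2^2\le\varepsilon$ for each $i$ with $0<x(i)<1$. *)

(* Defs.v *)
From HB Require Import structures.
From mathcomp Require Import all_boot all_order all_algebra.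
From mathcomp Require Import reals exp.
Set Implicit Arguments. Unset Strict Implicit. Unset Printing Implicit Defensive.
Import Order.TTheory GRing.Theory Num.Theory.
Local Open Scope ring_scope.

Definition gram (R : realType) (n d : nat) (u : 'I_n -> 'cV[R]_d)
  (x : 'I_n -> R) : 'M[R]_d :=
  \sum_(i < n) x i *: (u i *m (u i)^T).

Definition feasible (R : realType) (n m : nat) (c : 'I_m -> 'I_n -> R)
  (b : 'I_m -> R) (x : 'I_n -> R) : Prop :=
  (forall j : 'I_m, \sum_(i < n) c j i * x i <= b j) /\
  (forall i : 'I_n, 0 <= x i <= 1).

Definition supnorm (R : realType) (n : nat) (v : 'I_n -> R) : R :=
  \big[Num.max/0]_(i < n) `|v i|.

Definition sqnorm2 (R : realType) (d : nat) (v : 'cV[R]_d) : R :=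
  \sum_(k < d) v k 0 ^+ 2.

(* x is an optimal solution of  max log det X(x)  s.t. feasible x,
   with X(x) nonsingular (log det finite). Feasible y with singular X(y)
   have log det = -oo and are never better. *)
Definition logdet_optimal (R : realType) (n m d : nat) (u : 'I_n -> 'cV[R]_d)
  (c : 'I_m -> 'I_n -> R) (b : 'I_m -> R) (x : 'I_n -> R) : Prop :=
  feasible c b x /\ 0 < \det (gram u x) /\
  forall y, feasible c b y -> 0 < \det (gram u y) ->
    ln (\det (gram u y)) <= ln (\det (gram u x)).

Definition is_inv_sqrt (R : realType) (d : nat) (X S : 'M[R]_d) : Prop :=
  S^T = S /\ (forall w : 'cV[R]_d, w != 0 -> 0 < (w^T *m S *m w) 0 0) /\
  S *m S = invmx X.

(* Main.v *)
Require Import Defs.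
From HB Require Import structures.
From mathcomp Require Import all_boot all_order all_algebra.
From mathcomp Require Import reals exp.
From mathcomp Require Import ring lra.
Import Order.TTheory GRing.Theory Num.Theory.
Local Open Scope ring_scope.
Lemma detIuv (R : comPzRingType) d (a b : 'cV[R]_d) :
  \det (1%:M + a *m b^T) = 1 + (b^T *m a) 0 0.
Proof.
pose M := block_mx (1%:M : 'M[R]_d) a (- b^T) (1%:M : 'M[R]_1).
have E1 : M = block_mx (1%:M + a *m b^T) a 0 1%:M *m block_mx 1%:M 0 (- b^T) 1%:M.
  rewrite mulmx_block !mulmx1 !mul0mx !mulmx0 !mul1mx ?add0r ?addr0.
  by rewrite mulmxN addrK.
have E2 : M = block_mx 1%:M 0 (- b^T) 1%:M *m block_mx 1%:M a 0 (1%:M + b^T *m a).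
  rewrite mulmx_block !mulmx1 !mul0mx !mulmx0 !mul1mx ?add0r ?addr0.
  by rewrite mulNmx addrCA addNr addr0.
have := congr1 determinant (etrans (esym E1) E2).
rewrite !det_mulmx !det_ublock !det_lblock !det1 !mul1r ?mulr1. 
by rewrite det_mx11 !mxE /= mulr1n => ->.
Qed.

Lemma bern (R : realDomainType) (t : R) (D : nat) : 0 <= t <= 1 ->
  1 - D%:R * t <= (1 - t) ^+ D.
Proof.
move=> /andP[t0 t1]; elim: D => [|D IH]; first by rewrite mul0r subr0 expr0.
rewrite exprS.
have h : 0 <= 1 - t by lra.
have := ler_wpM2l h IH.
rewrite -natr1.
have D0 : 0 <= D%:R :> R by rewrite ler0n.
move: ((1 - t) ^+ D) => P H.
have : 0 <= D%:R * (t * t) by rewrite mulr_ge0 // mulr_ge0.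
nra.
Qed.

Lemma gram_pert (R : realType) (n d : nat) (u : 'I_n -> 'cV[R]_d)
  (x : 'I_n -> R) (i : 'I_n) (s v : R) :
  gram u (fun k => s * x k + (if k == i then v else 0)) =
  s *: gram u x + v *: (u i *m (u i)^T).
Proof.
rewrite /gram; under eq_bigr do rewrite scalerDl.
rewrite big_split /= scaler_sumr; congr (_ + _).
  by apply: eq_bigr => k _; rewrite scalerA.
rewrite (bigD1 i) //= eqxx big1 ?addr0 // => k /negbTE ->; by rewrite scale0r.
Qed.

Lemma sum_pert (R : realType) (n : nat) (c x : 'I_n -> R) (i : 'I_n) (s v : R) :
  \sum_(k < n) c k * (s * x k + (if k == i then v else 0)) =
  s * \sum_(k < n) c k * x k + c i * v.
Proof.
rewrite mulr_sumr (bigD1 i) //= [X in _ = X + _](bigD1 i) //= eqxx.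
rewrite -addrA [X in _ = _ + X]addrC addrA; congr (_ + _); first ring.
apply: eq_bigr => k /negbTE ->; rewrite addr0; ring.
Qed.

Lemma sqnorm2E (R : realType) d (v : 'cV[R]_d) : sqnorm2 v = (v^T *m v) 0 0.
Proof.
rewrite /sqnorm2 !mxE; apply: eq_bigr => k _; by rewrite mxE expr2.
Qed.

Theorem lemma4p12 (R : realType) (n m d : nat) (u : 'I_n -> 'cV[R]_d)
  (c : 'I_m -> 'I_n -> R) (b : 'I_m -> R) (eps : R) (x : 'I_n -> R)
  (S : 'M[R]_d) :
  0 < eps ->
  (forall j i, 0 <= c j i) ->
  (forall j, d%:R * supnorm (c j) / eps <= b j) ->
  logdet_optimal u c b x ->
  is_inv_sqrt (gram u x) S ->
  forall i : 'I_n, 0 < x i < 1 -> sqnorm2 (S *m u i) <= eps.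
Proof.
move=> eps0 c0 hb [[feasc feasx] [detX opt]] [ST [_ SS]] i /andP[xi0 xi1].
destruct d as [|D].
  by rewrite /sqnorm2 big_ord0 ltW.
set X := gram u x in detX opt SS *.
have Xu : X \in unitmx by rewrite unitmxE unitfE lt0r_neq0.
set w := ((u i)^T *m invmx X *m u i) 0 0.
have Hw : sqnorm2 (S *m u i) = w.
  rewrite sqnorm2E trmx_mul ST /w -SS !mulmxA; done.
rewrite Hw leNgt; apply/negP => hw.
set a : R := D.+1%:R / eps.
have a0 : 0 < a by rewrite divr_gt0 // ltr0n.
set K := a * w - 1.
have DK : D%:R < K.
  have : D.+1%:R < a * w.
    rewrite /a -mulrA ltr_pMr ?ltr0n // mulrC ltr_pdivlMr // mul1r //.
  rewrite /K -natr1; lra.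
have D0 : 0 <= D%:R :> R by rewrite ler0n.
set p := (1 - x i) / (a + 1).
set q := (K - D%:R) / (D%:R * K + K + 1).
have p0 : 0 < p by rewrite divr_gt0 //; lra.
have pE : p * (a + 1) = 1 - x i by rewrite /p mulfVK //; apply: lt0r_neq0; lra.
have q0 : 0 < q by rewrite divr_gt0 //; nra.
have qE : q * (D%:R * K + K + 1) = K - D%:R by rewrite /q mulfVK //; apply: lt0r_neq0; nra.
set t := p * q.
have t0 : 0 < t by rewrite mulr_gt0.
have K0 : 0 < K by lra.
have DK0 : 0 <= D%:R * K by rewrite mulr_ge0 // ltW.
have p1 : p < 1 by rewrite /p ltr_pdivrMr ?mul1r; lra.
have q1 : q < 1 by rewrite /q ltr_pdivrMr ?mul1r; lra.
have t1 : t < 1 by rewrite /t; nra.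
have tai : t * (a + 1) <= 1 - x i by rewrite /t mulrAC pE; nra.
have tDK : t * (D%:R * K) < K - D%:R.
  rewrite -qE /t -mulrA.
  have h1 : p * (D%:R * K) <= D%:R * K by nra.
  have : p * (D%:R * K) < D%:R * K + K + 1 by lra.
  move=> h2; rewrite mulrCA ltr_pM2l //.
pose y := fun k => (1 - t) * x k + (if k == i then t * a else 0).
have feasy : feasible c b y.
  split.
    move=> j; rewrite /y sum_pert.
    have cs : c j i <= supnorm (c j).
      rewrite /supnorm; apply: le_trans (le_bigmax _ _ i).
      by rewrite ger0_norm.
    have ca : c j i * a <= b j.
      apply: le_trans (hb j); rewrite /a mulrA ler_pM2r ?invr_gt0 //.
      rewrite mulrC ler_pM2l ?ltr0n //.
    have := feasc j; have := c0 j i; nra.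
  move=> k; rewrite /y; case: eqP => [->|_]; have := feasx k; move/andP=> [hk0 hk1]; apply/andP; nra.
have gy : gram u y = X *m ((1 - t) *: (1%:M + (t * a / (1 - t)) *: ((invmx X *m u i) *m (u i)^T))).
  rewrite /y gram_pert -/X -scalemxAr mulmxDr mulmx1 -scalemxAr !mulmxA mulmxV // mul1mx.
  rewrite scalerDr scalerA; congr (_ + _); congr (_ *: _).
  have : 1 - t != 0 by apply: lt0r_neq0; lra.
  by move=> h; field.
have detY : \det (gram u y) = \det X * ((1 - t) ^+ D * (1 + t * K)).
  rewrite gy det_mulmx detZ scalemxAl detIuv -scalemxAr mxE mulmxA -/w.
  rewrite /K exprS; congr (_ * _).
  have : 1 - t != 0 by apply: lt0r_neq0; lra.
  by move=> h; field.
have bern1 := @bern _ t D.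
have big1 : 1 < (1 - t) ^+ D * (1 + t * K).
  have := bern1 ltac:(apply/andP; split; lra).
  move: ((1 - t) ^+ D) => P HP.
  have : 0 < 1 + t * K by nra.
  nra.
have detlt : \det X < \det (gram u y) by rewrite detY; nra.
have := opt y feasy ltac:(lra).
rewrite leNgt ltr_ln ?posrE //; last lra.
by rewrite detlt.
Qed.
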